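(* Let $X$ be a bounded anti-linear operator on $H^2(\mathbb{D})$, let $S\in\mathcal{B}(H^2(\mathbb{D}))$ be a unilateral shift, and let $U$ be a unitary on $H^2(\mathbb{D})$ with $S=U^*M_zU$ (e.g. $Uf_n=z^n$ where $\{f_n\}$ is an orthonormal basis with $Sf_n=f_{n+1}$). Then $XM_z=SX$ if and only if there exists $\theta\in H^\infty(\mathbb{D})$ such that $X=U^*M_\theta J_{H^2(\mathbb{D})}$.
   Context: $H^2(\mathbb{D})$ is the Hardy space of the unit disc; $M_z$, $M_\theta$ are multiplication operators; $H^\infty(\mathbb{D})$ is the algebra of bounded analytic functions; $J_{H^2(\mathbb{D})}(\sum a_nz^n)=\sum\bar a_nz^n$. A unilateral shift on $H^2(\mathbb{D})$ is an operator $S$ for which there is an orthonormal basis $\{f_n\}_{n\in\mathbb{Z}_+}$ with $Sf_n=f_{n+1}$ for all $n$. *)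

(* Defs.v *)
(* H^2(D) is modelled through Taylor coefficients:
   f = sum a_n z^n  <->  a : nat -> C with sum |a_n|^2 < oo. *)
From Stdlib Require Import Reals.
From Coquelicot Require Import Coquelicot.
Open Scope R_scope.

Definition seqC := nat -> C.

Definition inH2 (a : seqC) : Prop := ex_series (fun n => (Cmod (a n)) ^ 2).

Definition H2norm (a : seqC) : R := sqrt (Series (fun n => (Cmod (a n)) ^ 2)).

Definition H2inner (a b : seqC) : C :=
  (Series (fun n => Re (Cmult (a n) (Cconj (b n)))),
   Series (fun n => Im (Cmult (a n) (Cconj (b n))))).

Definition addS (a b : seqC) : seqC := fun n => Cplus (a n) (b n).
Definition scalS (c : C) (a : seqC) : seqC := fun n => Cmult c (a n).

(* an operator on H^2 is a map seqC -> seqC, considered on H^2 only *)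
Definition maps_H2 (T : seqC -> seqC) : Prop := forall a, inH2 a -> inH2 (T a).

Definition bounded_op (T : seqC -> seqC) : Prop :=
  maps_H2 T /\ exists K : R, forall a, inH2 a -> H2norm (T a) <= K * H2norm a.

Definition linear_op (T : seqC -> seqC) : Prop :=
  (forall a b, inH2 a -> inH2 b -> T (addS a b) = addS (T a) (T b)) /\
  (forall c a, inH2 a -> T (scalS c a) = scalS c (T a)).

Definition antilinear_op (T : seqC -> seqC) : Prop :=
  (forall a b, inH2 a -> inH2 b -> T (addS a b) = addS (T a) (T b)) /\
  (forall c a, inH2 a -> T (scalS c a) = scalS (Cconj c) (T a)).

Definition bounded_linear (T : seqC -> seqC) : Prop := bounded_op T /\ linear_op T.
Definition bounded_antilinear (T : seqC -> seqC) : Prop := bounded_op T /\ antilinear_op T.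

Definition is_adjoint (U Ustar : seqC -> seqC) : Prop :=
  maps_H2 Ustar /\
  forall a b, inH2 a -> inH2 b -> H2inner (U a) b = H2inner a (Ustar b).

Definition unitary (U Ustar : seqC -> seqC) : Prop :=
  bounded_linear U /\ is_adjoint U Ustar /\
  (forall a, inH2 a -> U (Ustar a) = a) /\
  (forall a, inH2 a -> Ustar (U a) = a).

Definition orthonormal_basis (f : nat -> seqC) : Prop :=
  (forall n, inH2 (f n)) /\
  (forall n m, H2inner (f n) (f m) = (if Nat.eqb n m then RtoC 1 else RtoC 0)) /\
  (forall a, inH2 a -> (forall n, H2inner a (f n) = RtoC 0) -> a = (fun _ => RtoC 0)).

Definition unilateral_shift (Sh : seqC -> seqC) : Prop :=
  bounded_linear Sh /\ exists f, orthonormal_basis f /\ forall n, Sh (f n) = f (Datatypes.S n).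

(* M_z : multiplication by z, i.e. shift of coefficients *)
Definition Mz (a : seqC) : seqC :=
  fun n => match n with O => RtoC 0 | Datatypes.S k => a k end.

Definition JH2 (a : seqC) : seqC := fun n => Cconj (a n).

(* theta in H^infty(D), given by its Taylor coefficients t: the power series
   converges on the open unit disc and its sum is bounded there *)
Definition Hinf (t : seqC) : Prop :=
  (forall z : C, Cmod z < 1 -> exists l : C, is_series (fun n => Cmult (t n) (Cpow z n)) l) /\
  (exists M : R, forall (z l : C), Cmod z < 1 ->
      is_series (fun n => Cmult (t n) (Cpow z n)) l -> Cmod l <= M).

(* M_theta : multiplication by theta = Cauchy product of coefficient sequences *)
Definition Mtheta (t a : seqC) : seqC :=
  fun n => List.fold_right Cplus (RtoC 0) (List.map (fun k => Cmult (t k) (a (n - k)%nat)) (List.seq 0 (Datatypes.S n))).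

(* Main.v *)
Require Import Defs.
From Stdlib Require Import Reals List Lia Lra FunctionalExtensionality.
From Coquelicot Require Import Coquelicot.
Open Scope R_scope.


Fixpoint csum (f : nat -> C) (n : nat) : C :=
  match n with O => RtoC 0 | S m => Cplus (csum f m) (f m) end.
Fixpoint rsum (f : nat -> R) (n : nat) : R :=
  match n with O => 0 | S m => rsum f m + f m end.

Lemma Ceq (x y : C) : Re x = Re y -> Im x = Im y -> x = y.
Proof. destruct x, y; simpl; intros; subst; reflexivity. Qed.

Lemma fold_Cplus_acc (l : list C) (x : C) :
  fold_right Cplus x l = Cplus (fold_right Cplus (RtoC 0) l) x.
Proof. induction l; simpl. ring. rewrite IHl. ring. Qed.

Lemma fold_csum (f : nat -> C) n :
  fold_right Cplus (RtoC 0) (map f (seq 0 n)) = csum f n.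
Proof.
  induction n. reflexivity.
  rewrite List.seq_S, map_app, fold_right_app. simpl.
  rewrite fold_Cplus_acc, IHn. f_equal. ring.
Qed.

Lemma Mtheta_csum t a n : Mtheta t a n = csum (fun k => Cmult (t k) (a (n - k)%nat)) (S n).
Proof. unfold Mtheta. apply fold_csum. Qed.

Lemma csum_ext f g n : (forall k, (k < n)%nat -> f k = g k) -> csum f n = csum g n.
Proof. induction n; simpl; intros H. reflexivity. rewrite IHn, H; auto; lia. Qed.
Lemma rsum_ext f g n : (forall k, (k < n)%nat -> f k = g k) -> rsum f n = rsum g n.
Proof. induction n; simpl; intros H. reflexivity. rewrite IHn, H; auto; lia. Qed.
Lemma rsum_le f g n : (forall k, (k < n)%nat -> f k <= g k) -> rsum f n <= rsum g n.
Proof. induction n; simpl; intros H. lra. assert (f n <= g n) by (apply H; lia).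
 assert (rsum f n <= rsum g n) by (apply IHn; intros; apply H; lia). lra. Qed.
Lemma rsum_ge0 f n : (forall k, (k < n)%nat -> 0 <= f k) -> 0 <= rsum f n.
Proof. intros. replace 0 with (rsum (fun _ => 0) n). apply rsum_le; auto.
 induction n; simpl; auto. rewrite IHn. ring. intros; apply H; lia. Qed.
Lemma rsum_mono f n m : (forall k, 0 <= f k) -> (n <= m)%nat -> rsum f n <= rsum f m.
Proof. intros H Hnm. induction Hnm. lra. simpl. specialize (H m). lra. Qed.
Lemma csum_plus f g n : csum (fun k => Cplus (f k) (g k)) n = Cplus (csum f n) (csum g n).
Proof. induction n; simpl. apply Ceq; simpl; ring. rewrite IHn. ring. Qed.
Lemma rsum_plus f g n : rsum (fun k => f k + g k) n = rsum f n + rsum g n.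
Proof. induction n; simpl. ring. rewrite IHn. ring. Qed.
Lemma csum_mult_l c f n : csum (fun k => Cmult c (f k)) n = Cmult c (csum f n).
Proof. induction n; simpl. apply Ceq; simpl; ring. rewrite IHn. ring. Qed.
Lemma csum_mult_r c f n : csum (fun k => Cmult (f k) c) n = Cmult (csum f n) c.
Proof. induction n; simpl. apply Ceq; simpl; ring. rewrite IHn. ring. Qed.
Lemma rsum_mult_l c f n : rsum (fun k => c * f k) n = c * rsum f n.
Proof. induction n; simpl. ring. rewrite IHn. ring. Qed.
Lemma csum_conj f n : Cconj (csum f n) = csum (fun k => Cconj (f k)) n.
Proof. induction n; simpl. apply Ceq; simpl; ring. rewrite <- IHn. apply Ceq; simpl; ring. Qed.
Lemma Re_csum f n : Re (csum f n) = rsum (fun k => Re (f k)) n.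
Proof. induction n; simpl. reflexivity. rewrite <- IHn. reflexivity. Qed.
Lemma Im_csum f n : Im (csum f n) = rsum (fun k => Im (f k)) n.
Proof. induction n; simpl. reflexivity. rewrite <- IHn. reflexivity. Qed.
Lemma RtoC_rsum f n : RtoC (rsum f n) = csum (fun k => RtoC (f k)) n.
Proof. induction n; simpl. reflexivity. rewrite <- IHn. apply Ceq; simpl; ring. Qed.
Lemma Cmod_csum f n : Cmod (csum f n) <= rsum (fun k => Cmod (f k)) n.
Proof. induction n; simpl. rewrite Cmod_0; lra.
 eapply Rle_trans. apply Cmod_triangle. lra. Qed.
Lemma csum_swap (f : nat -> nat -> C) n m :
  csum (fun i => csum (fun j => f i j) m) n = csum (fun j => csum (fun i => f i j) n) m.
Proof. induction n; simpl.
 - induction m; simpl. reflexivity. rewrite <- IHm. apply Ceq; simpl; ring.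
 - rewrite IHn. rewrite <- csum_plus. reflexivity. Qed.
Lemma csum_zero f n : (forall k, (k < n)%nat -> f k = RtoC 0) -> csum f n = RtoC 0.
Proof. induction n; simpl; intros. reflexivity. rewrite IHn, H by (auto; lia). apply Ceq; simpl; ring. Qed.
Lemma csum_Sr f n : csum f (S n) = Cplus (csum f n) (f n).
Proof. reflexivity. Qed.
Lemma csum_delta f n i : (i < n)%nat ->
  csum (fun k => if Nat.eqb k i then f k else RtoC 0) n = f i.
Proof. induction n; intros. lia. rewrite csum_Sr. destruct (Nat.eq_dec i n).
 - subst. rewrite Nat.eqb_refl. rewrite csum_zero. ring.
   intros. destruct (Nat.eqb_spec k n); [lia|auto].
 - rewrite IHn by lia. destruct (Nat.eqb_spec n i); [lia|]. ring. Qed.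
Lemma rsum_sum_f f n : rsum f (S n) = sum_f_R0 f n.
Proof. induction n; simpl. ring. simpl in IHn. rewrite <- IHn. reflexivity. Qed.
Lemma sum_n_rsum (f : nat -> R) n : sum_n f n = rsum f (S n).
Proof. rewrite sum_n_Reals, rsum_sum_f. reflexivity. Qed.
Lemma csum_S f n : csum f (S n) = Cplus (f 0%nat) (csum (fun k => f (S k)) n).
Proof. induction n. simpl. apply Ceq; simpl; ring. change (csum f (S (S n))) with (Cplus (csum f (S n)) (f (S n))). rewrite IHn. simpl. ring. Qed.
Lemma rsum_S f n : rsum f (S n) = f 0%nat + rsum (fun k => f (S k)) n.
Proof. induction n; simpl. ring. simpl in IHn. rewrite IHn. ring. Qed.

Lemma Re_sum_n (f : nat -> C) n : Re (sum_n f n) = sum_n (fun k => Re (f k)) n.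
Proof. induction n. rewrite !sum_O. reflexivity. rewrite !sum_Sn, <- IHn. reflexivity. Qed.
Lemma Im_sum_n (f : nat -> C) n : Im (sum_n f n) = sum_n (fun k => Im (f k)) n.
Proof. induction n. rewrite !sum_O. reflexivity. rewrite !sum_Sn, <- IHn. reflexivity. Qed.

Lemma is_series_C (f : nat -> C) l :
  is_series f l <-> (is_series (fun n => Re (f n)) (Re l) /\ is_series (fun n => Im (f n)) (Im l)).
Proof.
  unfold is_series. split.
  - intros H. pose proof (proj1 (filterlim_locally _ _) H) as H'. split; apply filterlim_locally; intros eps;
    specialize (H' eps); revert H'; apply filter_imp;
    intros n [H1 H2]. rewrite <- Re_sum_n; exact H1. rewrite <- Im_sum_n; exact H2.
  - intros [H1 H2]. apply filterlim_locally. intros eps.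
    pose proof (proj1 (filterlim_locally _ _) H1 eps) as h1.
    pose proof (proj1 (filterlim_locally _ _) H2 eps) as h2.
    generalize (filter_and _ _ h1 h2). apply filter_imp. intros n [g1 g2]. split.
    change (ball (Re l) eps (Re (sum_n f n))). rewrite Re_sum_n; exact g1.
    change (ball (Im l) eps (Im (sum_n f n))). rewrite Im_sum_n; exact g2.
Qed.

Lemma im_le_Cmod (c : C) : Rabs (Im c) <= Cmod c.
Proof. destruct c as [x y]. unfold Cmod; simpl. rewrite <- sqrt_Rsqr_abs.
  apply sqrt_le_1_alt. unfold Rsqr. nra. Qed.

Lemma ex_series_C_abs (f : nat -> C) : ex_series (fun n => Cmod (f n)) -> exists l, is_series f l.
Proof. intros H. assert (H0 : @ex_series C_AbsRing C_CompleteNormedModule f).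
  { eapply (@ex_series_le C_AbsRing C_CompleteNormedModule); [|exact H]. intros n; apply Rle_refl. }
  exact H0. Qed.

Definition conv (u v : nat -> C) (n : nat) : C := csum (fun k => Cmult (u k) (v (n - k)%nat)) (S n).

Lemma Re_conv u v n : Re (conv u v n) =
  sum_f_R0 (fun k => Re (u k) * Re (v (n-k)%nat)) n - sum_f_R0 (fun k => Im (u k) * Im (v (n-k)%nat)) n.
Proof. unfold conv. rewrite Re_csum, <- !rsum_sum_f.
  generalize (S n) as m. induction m; cbn [rsum]. ring. rewrite IHm. simpl. unfold Re, Im. ring. Qed.
Lemma Im_conv u v n : Im (conv u v n) =
  sum_f_R0 (fun k => Re (u k) * Im (v (n-k)%nat)) n + sum_f_R0 (fun k => Im (u k) * Re (v (n-k)%nat)) n.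
Proof. unfold conv. rewrite Im_csum, <- !rsum_sum_f.
  generalize (S n) as m. induction m; cbn [rsum]. ring. rewrite IHm. simpl. unfold Re, Im. ring. Qed.

Lemma ex_series_R_le (a b : nat -> R) : (forall n, Rabs (a n) <= b n) -> ex_series b -> ex_series a.
Proof. intros H Hb. exact (@ex_series_le R_AbsRing R_CompleteNormedModule a b H Hb). Qed.

Lemma ex_abs_Re (u : nat -> C) : ex_series (fun n => Cmod (u n)) -> ex_series (fun n => Rabs (Re (u n))).
Proof. intros H; eapply ex_series_R_le; [|exact H]. intros n. rewrite Rabs_Rabsolu. apply re_le_Cmod. Qed.
Lemma ex_abs_Im (u : nat -> C) : ex_series (fun n => Cmod (u n)) -> ex_series (fun n => Rabs (Im (u n))).
Proof. intros H; eapply ex_series_R_le; [|exact H]. intros n. rewrite Rabs_Rabsolu. apply im_le_Cmod. Qed.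

Lemma is_series_conv u v lu lv :
  is_series u lu -> is_series v lv -> ex_series (fun n => Cmod (u n)) -> ex_series (fun n => Cmod (v n)) ->
  is_series (conv u v) (Cmult lu lv).
Proof.
  intros Hu Hv Au Av. apply is_series_C in Hu as [Hu1 Hu2]. apply is_series_C in Hv as [Hv1 Hv2].
  apply is_series_C. split.
  - eapply is_series_ext. intros n; symmetry; apply Re_conv.
    replace (Re (Cmult lu lv)) with (plus (Re lu * Re lv) (opp (Im lu * Im lv))) by (simpl; unfold plus, opp; simpl; unfold Re, Im; ring).
    pose proof (is_series_mult _ _ _ _ Hu1 Hv1 (ex_abs_Re _ Au) (ex_abs_Re _ Av)) as H1.
    pose proof (is_series_mult _ _ _ _ Hu2 Hv2 (ex_abs_Im _ Au) (ex_abs_Im _ Av)) as H2.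
    exact (@is_series_minus R_AbsRing R_NormedModule _ _ _ _ H1 H2).
  - eapply is_series_ext. intros n; symmetry; apply Im_conv.
    replace (Im (Cmult lu lv)) with (plus (Re lu * Im lv) (Im lu * Re lv)) by (simpl; unfold plus; simpl; unfold Re, Im; ring).
    pose proof (is_series_mult _ _ _ _ Hu1 Hv2 (ex_abs_Re _ Au) (ex_abs_Im _ Av)) as H1.
    pose proof (is_series_mult _ _ _ _ Hu2 Hv1 (ex_abs_Im _ Au) (ex_abs_Re _ Av)) as H2.
    exact (@is_series_plus R_AbsRing R_NormedModule _ _ _ _ H1 H2).
Qed.

Lemma is_series_Cmod_le (f : nat -> C) l B :
  is_series f l -> (forall N, Cmod (sum_n f N) <= B) -> Cmod l <= B.
Proof.
  intros H HB. unfold is_series in H.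
  assert (H2 : filterlim (fun N => norm (sum_n f N)) eventually (locally (norm l))).
  { eapply filterlim_comp. exact H. apply filterlim_norm. }
  change (Rbar_le (Cmod l) B). eapply is_lim_seq_le with (v := fun _ => B).
  intros n; apply HB. exact H2. apply is_lim_seq_const.
Qed.

Lemma rsum_le_Series (f : nat -> R) N : (forall k, 0 <= f k) -> ex_series f -> rsum f N <= Series f.
Proof.
  intros Hf He. apply Series_correct in He.
  assert (Hl : is_lim_seq (fun m => sum_n f (m + N)) (Series f)).
  { apply (is_lim_seq_incr_n (sum_n f) N). exact He. }
  change (Rbar_le (rsum f N) (Series f)).
  apply is_lim_seq_le with (u := fun _ => rsum f N) (v := fun m => sum_n f (m + N)).
  intros m. rewrite sum_n_rsum. apply rsum_mono; auto. lia.
  apply is_lim_seq_const. exact Hl.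
Qed.

Lemma ex_series_bounded (f : nat -> R) B : (forall k, 0 <= f k) -> (forall N, rsum f N <= B) -> ex_series f.
Proof.
  intros Hf HB. assert (ex_finite_lim_seq (sum_n f)).
  { apply ex_finite_lim_seq_incr with B. intros n. rewrite !sum_n_rsum. simpl. specialize (Hf (S n)).
    simpl in *. lra. intros n; rewrite sum_n_rsum; apply HB. }
  destruct H as [l Hl]. exists l. exact Hl.
Qed.

Lemma Series_le_bound (f : nat -> R) B : ex_series f -> (forall N, rsum f N <= B) -> Series f <= B.
Proof.
  intros He HB. apply Series_correct in He. change (Rbar_le (Series f) B).
  apply is_lim_seq_le with (u := sum_n f) (v := fun _ => B). intros n; rewrite sum_n_rsum; apply HB.
  exact He. apply is_lim_seq_const.
Qed.

Lemma Series_nonneg (f : nat -> R) : (forall k, 0 <= f k) -> ex_series f -> 0 <= Series f.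
Proof. intros. eapply Rle_trans; [|apply (rsum_le_Series f 0); auto]. simpl; lra. Qed.

Definition sq (a : seqC) (n : nat) : R := Cmod (a n) ^ 2.
Lemma sq_ge0 a n : 0 <= sq a n.
Proof. unfold sq. apply pow2_ge_0. Qed.

Lemma H2norm_sq a : inH2 a -> H2norm a ^ 2 = Series (sq a).
Proof. intros H. unfold H2norm. rewrite <- Rsqr_pow2. apply Rsqr_sqrt. apply Series_nonneg; auto. intros; apply sq_ge0. Qed.
Lemma H2norm_ge0 a : 0 <= H2norm a.
Proof. apply sqrt_pos. Qed.

Lemma inH2_le (a b : seqC) : (forall n, Cmod (a n) <= Cmod (b n)) -> inH2 b -> inH2 a.
Proof. intros H Hb. unfold inH2. eapply ex_series_R_le; [|exact Hb]. intros n. rewrite Rabs_pos_eq by apply pow2_ge_0.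
  apply pow_incr. split; auto. apply Cmod_ge_0. Qed.

Lemma inH2_Mz a : inH2 a -> inH2 (Mz a).
Proof. intros H. unfold inH2. apply ex_series_incr_1. simpl. exact H. Qed.

Definition tl (a : seqC) : seqC := fun n => a (S n).
Lemma inH2_tl a : inH2 a -> inH2 (tl a).
Proof. intros H. unfold inH2, tl. apply (ex_series_incr_1 (fun n => Cmod (a n) ^ 2)). exact H. Qed.

Lemma inH2_J a : inH2 a -> inH2 (JH2 a).
Proof. intros H. unfold inH2, JH2. eapply ex_series_ext; [|exact H]. intros n. simpl. rewrite Cmod_conj. reflexivity. Qed.

Lemma inH2_scal c a : inH2 a -> inH2 (scalS c a).
Proof. intros H. unfold inH2, scalS.
  eapply ex_series_ext. 2: apply (@ex_series_scal R_AbsRing R_NormedModule (Cmod c ^ 2) _ H).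
  intros n; simpl. unfold scal; simpl; unfold mult; simpl. rewrite Cmod_mult. ring. Qed.

Lemma inH2_add a b : inH2 a -> inH2 b -> inH2 (addS a b).
Proof. intros Ha Hb. unfold inH2, addS.
  assert (E : ex_series (fun n => 2 * (Cmod (a n) ^ 2 + Cmod (b n) ^ 2))).
  { apply (@ex_series_scal R_AbsRing R_NormedModule 2 (fun n => Cmod (a n) ^ 2 + Cmod (b n) ^ 2)).
    apply (@ex_series_plus R_AbsRing R_NormedModule); auto. }
  eapply ex_series_R_le; [|exact E]. intros n. rewrite Rabs_pos_eq by apply pow2_ge_0.
  pose proof (Cmod_triangle (a n) (b n)). pose proof (Cmod_ge_0 (Cplus (a n) (b n))).
  pose proof (Cmod_ge_0 (a n)). pose proof (Cmod_ge_0 (b n)).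
  set (z := Cmod (Cplus (a n) (b n))) in *. set (x := Cmod (a n)) in *. set (y := Cmod (b n)) in *.
  assert (z * z <= (x + y) * (x + y)) by (apply Rmult_le_compat; lra). simpl. pose proof (Rle_0_sqr (x - y)). unfold Rsqr in *. nra. Qed.

Definition e0 : seqC := fun n => match n with O => RtoC 1 | _ => RtoC 0 end.
Lemma rsum_zero n : rsum (fun _ => 0) n = 0.
Proof. induction n; simpl; auto. rewrite IHn; ring. Qed.
Lemma inH2_e0 : inH2 e0.
Proof. unfold inH2. apply ex_series_bounded with 1. intros; apply pow2_ge_0.
  intros [|N]. simpl; lra. rewrite rsum_S. rewrite (rsum_ext _ (fun _ => 0)). rewrite rsum_zero.
  simpl. rewrite Cmod_1. lra. intros k _. simpl. rewrite Cmod_0. ring. Qed.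

Lemma sum_n_csum (f : nat -> C) n : sum_n f n = csum f (S n).
Proof. induction n. rewrite sum_O. simpl. ring.
  rewrite sum_Sn, IHn. reflexivity. Qed.

Lemma coef_le_series a n : inH2 a -> sq a n <= Series (sq a).
Proof. intros H. eapply Rle_trans; [|apply (rsum_le_Series _ (S n)); auto using sq_ge0].
  simpl. pose proof (rsum_ge0 (sq a) n (fun k _ => sq_ge0 a k)). lra. Qed.

Lemma H2_coef_bound a : inH2 a -> exists B, 0 <= B /\ forall n, Cmod (a n) <= B.
Proof. intros H. pose proof (Series_nonneg (sq a) (sq_ge0 a) H) as HS. exists (1 + Series (sq a)). split.
  lra. intros n. pose proof (coef_le_series a n H). pose proof (Cmod_ge_0 (a n)).
  assert (E : sq a n = Cmod (a n) * Cmod (a n)) by (unfold sq; simpl; ring). rewrite E in H0.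
  set (S0 := Series (sq a)) in *. set (x := Cmod (a n)) in *.
  destruct (Rle_lt_dec x 1). lra. assert (x <= x * x) by nra. nra. Qed.

Lemma ex_series_geom_scal B r : 0 <= r < 1 -> ex_series (fun n => B * r ^ n).
Proof. intros Hr. apply (@ex_series_scal R_AbsRing R_NormedModule B (fun n => r ^ n)).
  exists (/ (1 - r)). apply is_series_geom. rewrite Rabs_pos_eq; lra. Qed.

Lemma abs_conv_bounded (a : seqC) B z : (forall n, Cmod (a n) <= B) -> Cmod z < 1 ->
  ex_series (fun n => Cmod (Cmult (a n) (Cpow z n))).
Proof. intros HB Hz. eapply ex_series_R_le; [|apply (ex_series_geom_scal B (Cmod z))].
  intros n. rewrite Rabs_pos_eq by apply Cmod_ge_0. rewrite Cmod_mult, Cmod_pow.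
  apply Rmult_le_compat_r. apply pow_le, Cmod_ge_0. apply HB. split; [apply Cmod_ge_0|auto]. Qed.

Lemma abs_conv a z : inH2 a -> Cmod z < 1 -> ex_series (fun n => Cmod (Cmult (a n) (Cpow z n))).
Proof. intros H Hz. destruct (H2_coef_bound a H) as [B [_ HB]]. eapply abs_conv_bounded; eauto. Qed.

Lemma is_series_zeroC : is_series (fun _ : nat => 0) 0.
Proof. assert (Hg : is_series (fun n => (/2) ^ n) (/(1 - /2))) by (apply is_series_geom; rewrite Rabs_pos_eq; lra).
  pose proof (@is_series_scal R_AbsRing R_NormedModule 0 _ _ Hg) as H.
  assert (E : scal (K := R_AbsRing) (V := R_NormedModule) 0 (/(1 - /2)) = 0)
    by (unfold scal; simpl; unfold mult; simpl; ring).
  rewrite E in H.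
  eapply is_series_ext; [|exact H]. intros n. unfold scal; simpl; unfold mult; simpl. ring. Qed.

Lemma conj_mult_self (z : C) : Cmult (Cconj z) z = RtoC (Cmod z ^ 2).
Proof. rewrite Cmod2_conj. ring. Qed.

Section Commutant.
Variable Y : seqC -> seqC.
Variable K : R.
Hypothesis HK : 0 <= K.
Hypothesis Ymap : maps_H2 Y.
Hypothesis Ybd : forall a, inH2 a -> H2norm (Y a) <= K * H2norm a.
Hypothesis Ylin : linear_op Y.
Hypothesis Ycomm : forall a, inH2 a -> Y (Mz a) = Mz (Y a).

Let th := Y e0.

Lemma decomp a : a = addS (scalS (a 0%nat) e0) (Mz (tl a)).
Proof. apply functional_extensionality. intros [|n]; unfold addS, scalS, e0, Mz, tl; simpl; ring. Qed.

Lemma Y_coef : forall n a, inH2 a -> Y a n = Mtheta th a n.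
Proof.
  intros n. induction n; intros a Ha.
  - rewrite (decomp a) at 1. destruct Ylin as [Yadd Yscal].
    rewrite Yadd, Yscal, Ycomm; auto using inH2_scal, inH2_e0, inH2_Mz, inH2_tl.
    rewrite Mtheta_csum. unfold addS, scalS, Mz. simpl. fold th. ring.
  - rewrite (decomp a) at 1. destruct Ylin as [Yadd Yscal].
    rewrite Yadd, Yscal, Ycomm; auto using inH2_scal, inH2_e0, inH2_Mz, inH2_tl.
    unfold addS, scalS, Mz. rewrite IHn by (apply inH2_tl; auto). fold th.
    rewrite !Mtheta_csum. rewrite (csum_Sr _ (S n)). 
    rewrite (csum_ext (fun k => Cmult (th k) (tl a (n - k)%nat)) (fun k => Cmult (th k) (a (S n - k)%nat))).
    rewrite Nat.sub_diag. ring.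
    intros k Hk. unfold tl. f_equal. f_equal. lia.
Qed.

Lemma Y_eq a : inH2 a -> Y a = Mtheta th a.
Proof. intros H. apply functional_extensionality. intros n. apply Y_coef; auto. Qed.

Lemma th_H2 : inH2 th.
Proof. apply Ymap, inH2_e0. Qed.

Lemma th_Hinf : Hinf th.
Proof.
  split.
  - intros z Hz. apply ex_series_C_abs. apply abs_conv; auto using th_H2.
  - exists ((K ^ 2 + 1) / 2). intros z l Hz Hl.
    set (r := Cmod z). assert (Hr : 0 <= r < 1) by (split; [apply Cmod_ge_0|auto]).
    set (q := r ^ 2). assert (Hq : 0 <= q < 1) by (unfold q; split; [apply pow2_ge_0|simpl; nra]).
    set (s := / (1 - q)). assert (Hs : 0 < s) by (unfold s; apply Rinv_0_lt_compat; lra).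
    set (k := fun n => Cpow (Cconj z) n).
    assert (sqk : forall n, sq k n = q ^ n).
    { intros n. unfold sq, k, q, r. rewrite Cmod_pow, Cmod_conj. rewrite <- !pow_mult. f_equal. lia. }
    assert (Hkser : is_series (sq k) s).
    { eapply is_series_ext; [|apply is_series_geom]. intros n; rewrite sqk; reflexivity. rewrite Rabs_pos_eq; lra. }
    assert (kH2 : inH2 k) by (exists s; exact Hkser).
    assert (Sk : Series (sq k) = s) by (apply is_series_unique; auto).
    set (v := fun n => RtoC (q ^ n)).
    assert (Hv : is_series v (RtoC s)).
    { apply is_series_C. split; simpl. apply is_series_geom. rewrite Rabs_pos_eq; lra. apply is_series_zeroC. }
    assert (Av : ex_series (fun n => Cmod (v n))).
    { exists s. eapply is_series_ext; [|apply is_series_geom]. intros n; unfold v. rewrite Cmod_R, Rabs_pos_eq; auto.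
      apply pow_le; lra. rewrite Rabs_pos_eq; lra. }
    assert (Au : ex_series (fun n => Cmod (Cmult (th n) (Cpow z n)))) by (apply abs_conv; auto using th_H2).
    pose proof (is_series_conv _ _ _ _ Hl Hv Au Av) as Hc.
    set (w := Y k).
    assert (wH2 : inH2 w) by (apply Ymap; auto).
    assert (convE : forall n, conv (fun n => Cmult (th n) (Cpow z n)) v n = Cmult (w n) (Cpow z n)).
    { intros n. unfold w. rewrite Y_eq by auto. rewrite Mtheta_csum. unfold conv. rewrite <- csum_mult_r.
      apply csum_ext. intros j Hj. unfold v, k, q, r.
      rewrite RtoC_pow, <- conj_mult_self, Cpow_mult_l. 
      replace (Cpow z n) with (Cmult (Cpow z j) (Cpow z (n - j))) by (rewrite <- Cpow_add_r; f_equal; lia). ring. }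
    assert (Sw : Series (sq w) <= K ^ 2 * s).
    { rewrite <- H2norm_sq by auto. rewrite <- Sk, <- H2norm_sq by auto.
      pose proof (Ybd k kH2). pose proof (H2norm_ge0 w). pose proof (H2norm_ge0 k). fold w in H.
      simpl. rewrite !Rmult_1_r. replace (K * K * (H2norm k * H2norm k)) with ((K * H2norm k) * (K * H2norm k)) by ring.
      apply Rmult_le_compat; lra. }
    assert (Hb : Cmod (Cmult l (RtoC s)) <= (K ^ 2 + 1) / 2 * s).
    { apply (is_series_Cmod_le _ _ _ Hc). intros N. rewrite sum_n_csum.
      eapply Rle_trans. apply Cmod_csum.
      eapply Rle_trans with (rsum (fun n => (sq w n + sq k n) / 2) (S N)).
      { apply rsum_le. intros n _. rewrite convE, Cmod_mult, Cmod_pow. unfold sq, k.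
        rewrite Cmod_pow, Cmod_conj. fold r. pose proof (Cmod_ge_0 (w n)). pose proof (pow_le r n (proj1 Hr)).
        pose proof (Rle_0_sqr (Cmod (w n) - r ^ n)). unfold Rsqr in *. simpl. nra. }
      unfold Rdiv. rewrite (rsum_ext _ (fun n => / 2 * (sq w n + sq k n))) by (intros; ring).
      rewrite rsum_mult_l, rsum_plus.
      pose proof (rsum_le_Series (sq w) (S N) (sq_ge0 w) wH2).
      pose proof (rsum_le_Series (sq k) (S N) (sq_ge0 k) kH2). rewrite Sk in *. nra. }
    rewrite Cmod_mult, Cmod_R, Rabs_pos_eq in Hb by lra.
    apply Rmult_le_reg_r with s; auto.
Qed.

End Commutant.

Definition cis (x : R) : C := (cos x, sin x).
Lemma cis_pow x n : Cpow (cis x) n = cis (INR n * x).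
Proof. induction n. simpl. unfold cis. rewrite Rmult_0_l, cos_0, sin_0. reflexivity.
  rewrite Cpow_S, IHn. unfold cis. rewrite S_INR. apply Ceq; simpl.
  replace ((INR n + 1) * x) with (x + INR n * x) by ring. rewrite cos_plus. ring.
  replace ((INR n + 1) * x) with (x + INR n * x) by ring. rewrite sin_plus. ring. Qed.
Lemma Cmod_cis x : Cmod (cis x) = 1.
Proof. unfold Cmod, cis. simpl. rewrite !Rmult_1_r. pose proof (sin2_cos2 x). unfold Rsqr in H. rewrite Rplus_comm, H. apply sqrt_1. Qed.

Section Roots.
Variable N : nat.
Hypothesis HN : (1 <= N)%nat.
Definition om := cis (2 * PI / INR N).

Lemma INR_N_pos : 0 < INR N.
Proof. apply lt_0_INR. lia. Qed.

Lemma om_N : Cpow om N = RtoC 1.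
Proof. unfold om. rewrite cis_pow. replace (INR N * (2 * PI / INR N)) with (2 * PI).
  unfold cis. rewrite cos_2PI, sin_2PI. reflexivity. field. pose proof INR_N_pos. lra. Qed.

Lemma om_ne1 d : (0 < d < N)%nat -> Cpow om d <> RtoC 1.
Proof. intros Hd E. unfold om in E. rewrite cis_pow in E. unfold cis in E. injection E as E1 _.
  set (x := INR d * (2 * PI / INR N) / 2) in *.
  assert (Hx : 0 < x < PI).
  { unfold x. pose proof INR_N_pos. assert (0 < INR d) by (apply lt_0_INR; lia).
    assert (INR d < INR N) by (apply lt_INR; lia). pose proof PI_RGT_0. split.
    apply Rmult_lt_0_compat; [|lra]. apply Rmult_lt_0_compat; auto. apply Rdiv_lt_0_compat; lra.
    replace (INR d * (2 * PI / INR N) / 2) with (PI * (INR d / INR N)) by (field; lra).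
    rewrite <- (Rmult_1_r PI) at 2. apply Rmult_lt_compat_l; auto.
    apply Rmult_lt_reg_r with (INR N); auto. unfold Rdiv. rewrite Rmult_assoc, Rinv_l; lra. }
  replace (INR d * (2 * PI / INR N)) with (2 * x) in E1 by (unfold x; field; pose proof INR_N_pos; lra).
  rewrite cos_2a_sin in E1. pose proof (sin_gt_0 x (proj1 Hx) (proj2 Hx)). nra. Qed.

Lemma Cmod_om_pow k : Cmod (Cpow om k) = 1.
Proof. rewrite Cmod_pow. unfold om. rewrite Cmod_cis. apply pow1. Qed.

Lemma conj_om_pow m : (m <= N)%nat -> Cconj (Cpow om m) = Cpow om (N - m).
Proof. intros Hm.
  assert (E1 : Cmult (Cconj (Cpow om m)) (Cpow om m) = RtoC 1).
  { rewrite conj_mult_self. rewrite Cmod_om_pow. apply Ceq; simpl; ring. }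
  assert (E2 : Cmult (Cpow om (N - m)) (Cpow om m) = RtoC 1).
  { rewrite <- Cpow_add_r. replace (N - m + m)%nat with N by lia. apply om_N. }
  assert (NZ : Cpow om m <> RtoC 0).
  { intros Z. pose proof (Cmod_om_pow m). rewrite Z, Cmod_0 in H. lra. }
  rewrite <- E2 in E1. 
  transitivity (Cmult (Cmult (Cconj (Cpow om m)) (Cpow om m)) (Cinv (Cpow om m))). field; auto.
  rewrite E1. field; auto. Qed.

Lemma geom_root_sum (q : C) : Cpow q N = RtoC 1 -> q <> RtoC 1 ->
  csum (fun k => Cpow q k) N = RtoC 0.
Proof. intros H1 H2.
  assert (T : forall n, Cmult (Cminus (RtoC 1) q) (csum (fun k => Cpow q k) n) = Cminus (RtoC 1) (Cpow q n)).
  { induction n. simpl. ring. rewrite csum_Sr, Cmult_plus_distr_l, IHn. simpl. ring. }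
  specialize (T N). rewrite H1 in T.
  assert (NZ : Cminus (RtoC 1) q <> RtoC 0). { intros Z. apply H2. 
    replace q with (Cminus (RtoC 1) (Cminus (RtoC 1) q)) by ring. rewrite Z. ring. }
  transitivity (Cmult (Cinv (Cminus (RtoC 1) q)) (Cmult (Cminus (RtoC 1) q) (csum (fun k => Cpow q k) N))).
  field; auto. rewrite T. ring. Qed.

Lemma root_sum n m : (n < N)%nat -> (m < N)%nat ->
  csum (fun k => Cmult (Cpow (Cpow om k) n) (Cconj (Cpow (Cpow om k) m))) N =
  if Nat.eqb n m then RtoC (INR N) else RtoC 0.
Proof. intros Hn Hm.
  rewrite (csum_ext _ (fun k => Cpow (Cmult (Cpow om n) (Cconj (Cpow om m))) k)).
  2:{ intros k _. rewrite Cpow_mult_l, <- Cpow_conj, <- !Cpow_mult_r.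
      rewrite (Nat.mul_comm k n), (Nat.mul_comm k m). reflexivity. }
  rewrite conj_om_pow by lia. rewrite <- Cpow_add_r.
  destruct (Nat.eqb_spec n m).
  - subst. replace (m + (N - m))%nat with N by lia. rewrite om_N.
    rewrite (csum_ext _ (fun _ => RtoC 1)) by (intros; apply Cpow_1_l).
    clear. induction N; simpl. reflexivity. rewrite IHn. destruct n. simpl. apply Ceq; simpl; ring.
    apply Ceq; simpl; ring.
  - apply geom_root_sum.
    + rewrite <- Cpow_mult_r, Nat.mul_comm, Cpow_mult_r, om_N. apply Cpow_1_l.
    + destruct (Nat.lt_ge_cases n m).
      * apply om_ne1. lia.
      * replace (n + (N - m))%nat with (N + (n - m))%nat by lia. rewrite Cpow_add_r, om_N.
        rewrite Cmult_1_l. apply om_ne1. lia.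
Qed.

Lemma Cmod_sq_C (x : C) : RtoC (Cmod x ^ 2) = Cmult x (Cconj x).
Proof. apply Cmod2_conj. Qed.

Lemma parseval (c : nat -> C) :
  rsum (fun k => Cmod (csum (fun n => Cmult (c n) (Cpow (Cpow om k) n)) N) ^ 2) N =
  INR N * rsum (fun n => Cmod (c n) ^ 2) N.
Proof.
  assert (H : RtoC (rsum (fun k => Cmod (csum (fun n => Cmult (c n) (Cpow (Cpow om k) n)) N) ^ 2) N) =
              RtoC (INR N * rsum (fun n => Cmod (c n) ^ 2) N)).
  2:{ injection H. auto. }
  rewrite RtoC_rsum. rewrite (csum_ext _ (fun k => csum (fun n => csum (fun m =>
        Cmult (Cmult (c n) (Cconj (c m))) (Cmult (Cpow (Cpow om k) n) (Cconj (Cpow (Cpow om k) m)))) N) N)).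
  2:{ intros k _. rewrite Cmod_sq_C. rewrite csum_conj. rewrite <- csum_mult_r. apply csum_ext. intros n _.
      rewrite <- csum_mult_l. apply csum_ext. intros m _. rewrite Cmult_conj. ring. }
  rewrite csum_swap. rewrite (csum_ext _ (fun n => csum (fun m =>
        Cmult (Cmult (c n) (Cconj (c m))) (if Nat.eqb n m then RtoC (INR N) else RtoC 0)) N)).
  2:{ intros n Hn. rewrite csum_swap. apply csum_ext. intros m Hm. rewrite csum_mult_l. f_equal. apply root_sum; auto. }
  rewrite RtoC_mult, RtoC_rsum, <- csum_mult_l. apply csum_ext. intros n Hn.
  rewrite (csum_ext _ (fun m => if Nat.eqb m n then Cmult (Cmult (c n) (Cconj (c m))) (RtoC (INR N)) else RtoC 0)).
  rewrite csum_delta by auto. rewrite Cmod_sq_C. ring.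
  intros m _. destruct (Nat.eqb_spec n m), (Nat.eqb_spec m n); subst; try lia; auto. ring.
Qed.

End Roots.

Lemma csum_split f N j : csum f (N + j) = Cplus (csum f N) (csum (fun i => f (N + i)%nat) j).
Proof. induction j. rewrite Nat.add_0_r. simpl. ring. rewrite Nat.add_succ_r. simpl. rewrite IHj. ring. Qed.
Lemma rsum_split f N j : rsum f (N + j) = rsum f N + rsum (fun i => f (N + i)%nat) j.
Proof. induction j. rewrite Nat.add_0_r. simpl. ring. rewrite Nat.add_succ_r. simpl. rewrite IHj. ring. Qed.

Lemma is_series_Cmod_le_loc (f : nat -> C) l P B N :
  is_series f l -> (forall M, (N <= M)%nat -> Cmod (Cminus (sum_n f M) P) <= B) -> Cmod (Cminus l P) <= B.
Proof.
  intros H HB. unfold is_series in H.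
  assert (H1 : filterlim (fun M => plus (sum_n f M) (opp P)) eventually (locally (plus l (opp P)))).
  { eapply filterlim_comp_2; [exact H | apply filterlim_const | exact (@filterlim_plus C_AbsRing C_NormedModule l (opp P))]. }
  assert (H2 : filterlim (fun M => norm (plus (sum_n f M) (opp P))) eventually (locally (norm (plus l (opp P))))).
  { eapply filterlim_comp. exact H1. apply filterlim_norm. }
  change (Rbar_le (Cmod (Cminus l P)) B). eapply is_lim_seq_le_loc with (v := fun _ => B).
  2: exact H2. 2: apply is_lim_seq_const. exists N. intros M HM. apply HB; auto.
Qed.

Lemma tail_bound (f : nat -> C) l N : is_series f l -> ex_series (fun n => Cmod (f n)) ->
  Cmod (Cminus (csum f N) l) <= Series (fun n => Cmod (f n)) - rsum (fun n => Cmod (f n)) N.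
Proof.
  intros H Ha. replace (Cminus (csum f N) l) with (Copp (Cminus l (csum f N))) by ring.
  rewrite Cmod_opp. apply (is_series_Cmod_le_loc f l _ _ N H).
  intros M HM. rewrite sum_n_csum. replace (S M) with (N + (S M - N))%nat by lia.
  rewrite csum_split. replace (Cminus (Cplus (csum f N) (csum (fun i => f (N + i)%nat) (S M - N))) (csum f N))
    with (csum (fun i => f (N + i)%nat) (S M - N)) by ring.
  eapply Rle_trans. apply Cmod_csum.
  pose proof (rsum_le_Series (fun n => Cmod (f n)) (N + (S M - N)) (fun k => Cmod_ge_0 _) Ha).
  rewrite rsum_split in H0. lra.
Qed.

Lemma tail_small (f : nat -> R) : (forall k, 0 <= f k) -> ex_series f ->
  forall eta, 0 < eta -> exists N1, forall N, (N1 <= N)%nat -> Series f - rsum f N < eta.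
Proof.
  intros Hf He eta Heta. apply Series_correct in He. assert (He2 : is_lim_seq (sum_n f) (Series f)) by exact He.
  pose proof (proj2 (is_lim_seq_spec _ _) He2 (mkposreal eta Heta)) as H. destruct H as [N1 HN1].
  exists (S N1). intros N HN. destruct N. lia. specialize (HN1 N ltac:(lia)). simpl in HN1.
  rewrite sum_n_rsum in HN1. apply Rabs_lt_between in HN1. lra.
Qed.

Lemma rsum_const x n : rsum (fun _ => x) n = INR n * x.
Proof. induction n; simpl. ring. rewrite IHn. destruct n; simpl; ring. Qed.

Lemma circle_step N (HN : (1 <= N)%nat) (c d G B : nat -> C) M tau sig :
  0 <= M -> 0 <= tau -> 0 <= sig ->
  (forall k, (k < N)%nat -> Cmod (G k) <= M * Cmod (B k)) ->
  (forall k, (k < N)%nat -> Cmod (Cminus (csum (fun n => Cmult (c n) (Cpow (Cpow (om N) k) n)) N) (G k)) <= tau) ->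
  (forall k, (k < N)%nat -> Cmod (Cminus (csum (fun n => Cmult (d n) (Cpow (Cpow (om N) k) n)) N) (B k)) <= sig) ->
  rsum (sq c) N <= (1 + (M * sig + tau)) * M ^ 2 * rsum (sq d) N + (M * sig + tau) + (M * sig + tau) ^ 2.
Proof.
  intros HM Ht Hs HGB HP HQ. set (e := M * sig + tau).
  assert (He : 0 <= e) by (unfold e; nra).
  set (P := fun k => csum (fun n => Cmult (c n) (Cpow (Cpow (om N) k) n)) N).
  set (Q := fun k => csum (fun n => Cmult (d n) (Cpow (Cpow (om N) k) n)) N).
  assert (pt : forall k, (k < N)%nat -> Cmod (P k) ^ 2 <= (1 + e) * M ^ 2 * Cmod (Q k) ^ 2 + (e + e ^ 2)).
  { intros k Hk. specialize (HGB k Hk). specialize (HP k Hk). specialize (HQ k Hk). fold (P k) in HP. fold (Q k) in HQ.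
    assert (t1 : Cmod (P k) <= Cmod (Cminus (P k) (G k)) + Cmod (G k)).
    { replace (P k) with (Cplus (Cminus (P k) (G k)) (G k)) at 1 by ring. apply Cmod_triangle. }
    assert (t2 : Cmod (B k) <= Cmod (Cminus (Q k) (B k)) + Cmod (Q k)).
    { replace (B k) with (Cplus (Copp (Cminus (Q k) (B k))) (Q k)) at 1 by ring.
      eapply Rle_trans. apply Cmod_triangle. rewrite Cmod_opp. lra. }
    assert (t3 : Cmod (P k) <= M * Cmod (Q k) + e).
    { unfold e. assert (M * Cmod (B k) <= M * (sig + Cmod (Q k))) by (apply Rmult_le_compat_l; lra). nra. }
    pose proof (Cmod_ge_0 (P k)). pose proof (Cmod_ge_0 (Q k)).
    set (p := Cmod (P k)) in *. set (q := Cmod (Q k)) in *.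
    assert (p * p <= (M * q + e) * (M * q + e)) by (apply Rmult_le_compat; lra).
    pose proof (Rle_0_sqr (M * q - 1)). unfold Rsqr in *. simpl. nra. }
  assert (S1 : rsum (fun k => Cmod (P k) ^ 2) N <= rsum (fun k => (1 + e) * M ^ 2 * Cmod (Q k) ^ 2 + (e + e ^ 2)) N)
    by (apply rsum_le; auto).
  rewrite rsum_plus, rsum_mult_l in S1. unfold P, Q in S1. rewrite !parseval in S1 by auto.
  assert (Ec : rsum (fun _ => e + e ^ 2) N = INR N * (e + e ^ 2)).
  { apply rsum_const. }
  rewrite Ec in S1. pose proof (INR_N_pos N HN) as HNp.
  apply Rmult_le_reg_l with (INR N); auto. unfold sq. nra.
Qed.

Lemma rsum_term f n N : (forall k, 0 <= f k) -> (n < N)%nat -> f n <= rsum f N.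
Proof. intros Hf Hn. replace N with (S n + (N - S n))%nat by lia. rewrite rsum_split. simpl.
  pose proof (rsum_ge0 f n (fun k _ => Hf k)). pose proof (rsum_ge0 (fun i => f (S (n + i))) (N - S n) (fun k _ => Hf _)). lra. Qed.

Lemma lim0_bound (u : nat -> R) : is_lim_seq u 0 -> exists B, forall n, Rabs (u n) <= B.
Proof. intros H. pose proof (proj2 (is_lim_seq_spec _ _) H (mkposreal 1 Rlt_0_1)) as [N HN].
  exists (1 + rsum (fun k => Rabs (u k)) N). intros n. destruct (Nat.lt_ge_cases n N).
  - pose proof (rsum_term (fun k => Rabs (u k)) n N (fun k => Rabs_pos _) H0). lra.
  - specialize (HN n H0). simpl in HN. rewrite Rminus_0_r in HN.
    pose proof (rsum_ge0 (fun k => Rabs (u k)) N (fun k _ => Rabs_pos _)). lra. Qed.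

Lemma Cmod_le_ReIm (c : C) : Cmod c <= Rabs (Re c) + Rabs (Im c).
Proof. destruct c as [x y]. unfold Cmod; simpl. pose proof (Rabs_pos x). pose proof (Rabs_pos y).
  rewrite <- (sqrt_Rsqr (Rabs x + Rabs y)) by lra.
  apply sqrt_le_1_alt. unfold Rsqr.
  assert (x * x = Rabs x * Rabs x) by (rewrite <- Rabs_mult; rewrite Rabs_pos_eq; nra).
  assert (y * y = Rabs y * Rabs y) by (rewrite <- Rabs_mult; rewrite Rabs_pos_eq; nra).
  rewrite !Rmult_1_r. nra. Qed.

Lemma is_series_bounded_terms (f : nat -> C) l : is_series f l -> exists B, forall n, Cmod (f n) <= B.
Proof. intros H. apply is_series_C in H as [H1 H2].
  destruct (lim0_bound _ (ex_series_lim_0 _ (ex_intro _ _ H1))) as [B1 HB1].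
  destruct (lim0_bound _ (ex_series_lim_0 _ (ex_intro _ _ H2))) as [B2 HB2].
  exists (B1 + B2). intros n. eapply Rle_trans. apply Cmod_le_ReIm. specialize (HB1 n); specialize (HB2 n). lra. Qed.

Lemma Hinf_abs t rho : Hinf t -> 0 <= rho < 1 -> ex_series (fun n => Cmod (t n) * rho ^ n).
Proof.
  intros [H1 _] Hr. set (r' := (1 + rho) / 2).
  assert (Hr' : 0 < r' < 1) by (unfold r'; lra).
  destruct (H1 (RtoC r')) as [l Hl]. rewrite Cmod_R, Rabs_pos_eq; lra.
  destruct (is_series_bounded_terms _ _ Hl) as [B HB].
  eapply ex_series_R_le; [|apply (ex_series_geom_scal B (rho / r'))].
  - intros n. rewrite Rabs_pos_eq by (apply Rmult_le_pos; [apply Cmod_ge_0|apply pow_le; lra]).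
    specialize (HB n). rewrite Cmod_mult, Cmod_pow, Cmod_R, Rabs_pos_eq in HB by lra.
    unfold Rdiv. rewrite Rpow_mult_distr, pow_inv.
    replace (Cmod (t n) * rho ^ n) with ((Cmod (t n) * r' ^ n) * (rho ^ n * / r' ^ n)).
    apply Rmult_le_compat_r; auto. apply Rmult_le_pos. apply pow_le; lra. apply Rlt_le, Rinv_0_lt_compat, pow_lt; lra.
    field. apply pow_nonzero; lra.
  - split. apply Rmult_le_pos; [lra|]. apply Rlt_le, Rinv_0_lt_compat; lra.
    apply Rmult_lt_reg_r with r'. lra. unfold Rdiv. rewrite Rmult_assoc, Rinv_l by lra. unfold r'. lra.
Qed.

Lemma Hinf_M t : Hinf t -> exists M, 0 <= M /\
  forall z l, Cmod z < 1 -> is_series (fun n => Cmult (t n) (Cpow z n)) l -> Cmod l <= M.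
Proof. intros [_ [M HM]]. exists (Rmax M 0). split. apply Rmax_r.
  intros z l Hz Hl. eapply Rle_trans. eapply HM; eauto. apply Rmax_l. Qed.

Definition Csr (f : nat -> C) : C := (Series (fun n => Re (f n)), Series (fun n => Im (f n))).
Lemma Csr_correct f : ex_series (fun n => Cmod (f n)) -> is_series f (Csr f).
Proof. intros H. destruct (ex_series_C_abs f H) as [l Hl].
  pose proof Hl as Hl'. apply is_series_C in Hl' as [h1 h2].
  replace (Csr f) with l. exact Hl. unfold Csr. apply Ceq; simpl; symmetry; apply is_series_unique; auto. Qed.

Lemma conv_Mtheta t b z n :
  conv (fun n => Cmult (t n) (Cpow z n)) (fun n => Cmult (b n) (Cpow z n)) n = Cmult (Mtheta t b n) (Cpow z n).
Proof. rewrite Mtheta_csum. unfold conv. rewrite <- csum_mult_r. apply csum_ext. intros j Hj.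
  replace (Cpow z n) with (Cmult (Cpow z j) (Cpow z (n - j))) by (rewrite <- Cpow_add_r; f_equal; lia). ring. Qed.

Lemma le_of_eps A Cst : (forall delta, 0 < delta -> A <= Cst + delta) -> A <= Cst.
Proof. intros H. destruct (Rle_lt_dec A Cst); auto. specialize (H ((A - Cst) / 2) ltac:(lra)). lra. Qed.

Section Key.
Variable t b : seqC.
Hypothesis Ht : Hinf t.
Hypothesis Hb : inH2 b.
Variable M : R.
Hypothesis HM0 : 0 <= M.
Hypothesis HM : forall z l, Cmod z < 1 -> is_series (fun n => Cmult (t n) (Cpow z n)) l -> Cmod l <= M.

Let g := Mtheta t b.
Let Bn := Series (sq b).
Let Cst := M ^ 2 * Bn.

Lemma Bn_ge0 : 0 <= Bn.
Proof. apply Series_nonneg; auto using sq_ge0. Qed.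

Lemma claim1 rho L : 0 < rho < 1 ->
  rsum (sq (fun n => Cmult (g n) (RtoC (rho ^ n)))) L <= Cst.
Proof.
  intros Hr.
  set (c := fun n => Cmult (g n) (RtoC (rho ^ n))).
  set (d := fun n => Cmult (b n) (RtoC (rho ^ n))).
  set (al := fun n => Cmod (t n) * rho ^ n).
  set (be := fun n => Cmod (b n) * rho ^ n).
  assert (Hal : ex_series al) by (apply Hinf_abs; auto; lra).
  assert (Hbe : ex_series be).
  { destruct (H2_coef_bound b Hb) as [B0 [_ HB0]]. eapply ex_series_R_le; [|apply (ex_series_geom_scal B0 rho); lra].
    intros n. unfold be. rewrite Rabs_pos_eq by (apply Rmult_le_pos; [apply Cmod_ge_0|apply pow_le; lra]).
    apply Rmult_le_compat_r. apply pow_le; lra. apply HB0. }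
  assert (Cc : forall n, Cmod (c n) = Cmod (g n) * rho ^ n).
  { intros n. unfold c. rewrite Cmod_mult, Cmod_R, Rabs_pos_eq; auto. apply pow_le; lra. }
  assert (Cd : forall n, Cmod (d n) = be n).
  { intros n. unfold d, be. rewrite Cmod_mult, Cmod_R, Rabs_pos_eq; auto. apply pow_le; lra. }
  assert (Hc : ex_series (fun n => Cmod (c n))).
  { destruct Hal as [la Hla]. destruct Hbe as [lb Hlb].
    assert (Aal : ex_series (fun n => Rabs (al n))).
    { exists la. eapply is_series_ext; [|exact Hla]. intros n. rewrite Rabs_pos_eq; auto.
      unfold al. apply Rmult_le_pos; [apply Cmod_ge_0|apply pow_le; lra]. }
    assert (Abe : ex_series (fun n => Rabs (be n))).
    { exists lb. eapply is_series_ext; [|exact Hlb]. intros n. rewrite Rabs_pos_eq; auto.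
      unfold be. apply Rmult_le_pos; [apply Cmod_ge_0|apply pow_le; lra]. }
    pose proof (is_series_mult _ _ _ _ Hla Hlb Aal Abe) as Hm.
    eapply ex_series_R_le; [|exists (la * lb); exact Hm].
    intros n. rewrite Rabs_pos_eq by apply Cmod_ge_0. rewrite Cc. unfold g. rewrite Mtheta_csum.
    rewrite <- rsum_sum_f. eapply Rle_trans. apply Rmult_le_compat_r. apply pow_le; lra. apply Cmod_csum.
    rewrite Rmult_comm, <- rsum_mult_l. apply Req_le. apply rsum_ext. intros k Hk. unfold al, be.
    rewrite Cmod_mult. replace (rho ^ n) with (rho ^ k * rho ^ (n - k)) by (rewrite <- pow_add; f_equal; lia). ring. }
  assert (Hd : ex_series (fun n => Cmod (d n))).
  { eapply ex_series_ext; [|exact Hbe]. intros n; rewrite Cd; auto. }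
  set (Tc := Series (fun n => Cmod (c n))). set (Td := Series (fun n => Cmod (d n))).
  assert (step : forall N, (1 <= N)%nat ->
    let e := M * (Td - rsum (fun n => Cmod (d n)) N) + (Tc - rsum (fun n => Cmod (c n)) N) in
    rsum (sq c) N <= (1 + e) * M ^ 2 * rsum (sq d) N + e + e ^ 2).
  { intros N HN e.
    set (z := fun k => Cmult (RtoC rho) (Cpow (Cpow (om N) k) 1)).
    assert (Hz : forall k, Cmod (z k) = rho).
    { intros k. unfold z. rewrite Cmod_mult, Cmod_R, Rabs_pos_eq by lra. rewrite Cpow_1_r, Cmod_om_pow. ring. }
    set (u := fun k n => Cmult (t n) (Cpow (z k) n)).
    set (v := fun k n => Cmult (b n) (Cpow (z k) n)).
    assert (zpow : forall k n, Cpow (z k) n = Cmult (RtoC (rho ^ n)) (Cpow (Cpow (om N) k) n)).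
    { intros k n. unfold z. rewrite Cpow_1_r, Cpow_mult_l, RtoC_pow. reflexivity. }
    assert (Au : forall k, ex_series (fun n => Cmod (u k n))).
    { intros k. eapply ex_series_ext; [|exact Hal]. intros n. unfold u, al. rewrite Cmod_mult, Cmod_pow, Hz. auto. }
    assert (Av : forall k, ex_series (fun n => Cmod (v k n))).
    { intros k. eapply ex_series_ext; [|exact Hbe]. intros n. unfold v, be. rewrite Cmod_mult, Cmod_pow, Hz. auto. }
    set (G := fun k => Cmult (Csr (u k)) (Csr (v k))).
    set (B := fun k => Csr (v k)).
    assert (e1 : forall k n, Cmult (c n) (Cpow (Cpow (om N) k) n) = conv (u k) (v k) n).
    { intros k n. unfold u, v. rewrite conv_Mtheta. fold g. rewrite zpow. unfold c. ring. }
    assert (e2 : forall k n, Cmult (d n) (Cpow (Cpow (om N) k) n) = v k n).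
    { intros k n. unfold v, d. rewrite zpow. ring. }
    apply (circle_step N HN c d G B); auto.
    - pose proof (rsum_le_Series _ N (fun k => Cmod_ge_0 (c k)) Hc). fold Tc in H. lra.
    - pose proof (rsum_le_Series _ N (fun k => Cmod_ge_0 (d k)) Hd). fold Td in H. lra.
    - intros k _. unfold G, B. rewrite Cmod_mult. apply Rmult_le_compat_r. apply Cmod_ge_0.
      eapply HM. rewrite Hz. lra. apply Csr_correct. apply Au.
    - intros k _. 
      assert (Hs : is_series (fun n => Cmult (c n) (Cpow (Cpow (om N) k) n)) (G k)).
      { eapply is_series_ext. intros n. symmetry. apply e1. apply is_series_conv; auto using Csr_correct. }
      assert (Hx : ex_series (fun n => Cmod (Cmult (c n) (Cpow (Cpow (om N) k) n)))).
      { eapply ex_series_ext; [|exact Hc]. intros n. rewrite Cmod_mult, Cmod_pow, Cmod_om_pow, pow1. symmetry; apply Rmult_1_r. }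
      eapply Rle_trans. apply (tail_bound _ _ N Hs Hx).
      assert (Ex : forall n, Cmod (Cmult (c n) (Cpow (Cpow (om N) k) n)) = Cmod (c n)).
      { intros n. rewrite Cmod_mult, Cmod_pow, Cmod_om_pow, pow1. apply Rmult_1_r. }
      rewrite (Series_ext _ _ Ex), (rsum_ext _ (fun n => Cmod (c n))) by auto. fold Tc. lra.
    - intros k _.
      assert (Hs : is_series (fun n => Cmult (d n) (Cpow (Cpow (om N) k) n)) (B k)).
      { eapply is_series_ext. intros n. symmetry. apply e2. apply Csr_correct; auto. }
      assert (Hx : ex_series (fun n => Cmod (Cmult (d n) (Cpow (Cpow (om N) k) n)))).
      { eapply ex_series_ext; [|exact Hd]. intros n. rewrite Cmod_mult, Cmod_pow, Cmod_om_pow, pow1. symmetry; apply Rmult_1_r. }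
      eapply Rle_trans. apply (tail_bound _ _ N Hs Hx).
      assert (Ex : forall n, Cmod (Cmult (d n) (Cpow (Cpow (om N) k) n)) = Cmod (d n)).
      { intros n. rewrite Cmod_mult, Cmod_pow, Cmod_om_pow, pow1. apply Rmult_1_r. }
      rewrite (Series_ext _ _ Ex), (rsum_ext _ (fun n => Cmod (d n))) by auto. fold Td. lra. }
  assert (sqd : forall N, rsum (sq d) N <= Bn).
  { intros N. eapply Rle_trans; [|apply (rsum_le_Series (sq b) N (sq_ge0 b) Hb)].
    apply rsum_le. intros n _. unfold sq, d. rewrite Cmod_mult, Cmod_R, Rabs_pos_eq by (apply pow_le; lra).
    pose proof (pow_le rho n (Rlt_le _ _ (proj1 Hr))). assert (rho ^ n <= 1) by (rewrite <- (pow1 n); apply pow_incr; lra).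
    pose proof (Cmod_ge_0 (b n)). set (x := Cmod (b n)) in *. set (y := rho ^ n) in *. simpl.
    assert (x * y <= x) by nra. assert (0 <= x * y) by nra. nra. }
  pose proof Bn_ge0 as HBn.
  apply le_of_eps. intros delta Hdelta.
  set (dl := Rmin 1 (delta / (Cst + 2))).
  assert (Hcst : 0 <= Cst) by (unfold Cst; apply Rmult_le_pos; [apply pow2_ge_0|auto]).
  assert (Hdl : 0 < dl) by (unfold dl; apply Rmin_glb_lt; [lra|apply Rdiv_lt_0_compat; lra]).
  set (eta := dl / (M + 1)).
  assert (Heta : 0 < eta) by (unfold eta; apply Rdiv_lt_0_compat; lra).
  destruct (tail_small _ (fun k => Cmod_ge_0 (c k)) Hc eta Heta) as [N1 HN1].
  destruct (tail_small _ (fun k => Cmod_ge_0 (d k)) Hd eta Heta) as [N2 HN2].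
  set (N := S (N1 + N2 + L)).
  specialize (step N ltac:(unfold N; lia)). cbv zeta in step.
  specialize (HN1 N ltac:(unfold N; lia)). specialize (HN2 N ltac:(unfold N; lia)). fold Tc in HN1. fold Td in HN2.
  set (e := M * (Td - rsum (fun n => Cmod (d n)) N) + (Tc - rsum (fun n => Cmod (c n)) N)) in step.
  assert (Hc0 : 0 <= Tc - rsum (fun n => Cmod (c n)) N).
  { pose proof (rsum_le_Series _ N (fun k => Cmod_ge_0 (c k)) Hc). fold Tc in H. lra. }
  assert (Hd0 : 0 <= Td - rsum (fun n => Cmod (d n)) N).
  { pose proof (rsum_le_Series _ N (fun k => Cmod_ge_0 (d k)) Hd). fold Td in H. lra. }
  assert (He0 : 0 <= e) by (unfold e; nra).
  assert (He : e <= dl).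
  { unfold e. assert (M * (Td - rsum (fun n => Cmod (d n)) N) <= M * eta) by (apply Rmult_le_compat_l; lra).
    assert (M * eta + eta = dl) by (unfold eta; field; lra). lra. }
  assert (dl1 : dl <= 1) by apply Rmin_l.
  assert (dl2 : dl * (Cst + 2) <= delta).
  { unfold dl. pose proof (Rmin_r 1 (delta / (Cst + 2))).
    apply Rle_trans with (delta / (Cst + 2) * (Cst + 2)). apply Rmult_le_compat_r; lra. right; field; lra. }
  assert (mono : rsum (sq c) L <= rsum (sq c) N) by (apply rsum_mono; [apply sq_ge0|unfold N; lia]).
  specialize (sqd N).
  assert (M ^ 2 * rsum (sq d) N <= Cst) by (unfold Cst; apply Rmult_le_compat_l; [apply pow2_ge_0|auto]).
  assert (0 <= M ^ 2 * rsum (sq d) N) by (apply Rmult_le_pos; [apply pow2_ge_0|apply rsum_ge0; intros; apply sq_ge0]).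
  assert ((1 + e) * M ^ 2 * rsum (sq d) N <= (1 + e) * Cst).
  { rewrite Rmult_assoc. apply Rmult_le_compat_l; lra. }
  assert (e * Cst <= dl * Cst) by (apply Rmult_le_compat_r; lra).
  assert (e ^ 2 <= dl) by (simpl; nra).
  unfold c in *. nra.
Qed.


Lemma bernoulli x m : 0 <= x <= 1 -> 1 - INR m * x <= (1 - x) ^ m.
Proof. intros Hx. induction m. simpl. lra. rewrite S_INR. simpl.
  assert (0 <= (1 - x) ^ m) by (apply pow_le; lra). pose proof (pos_INR m). assert ((1 - x) * (1 - INR m * x) <= (1 - x) * (1 - x) ^ m) by (apply Rmult_le_compat_l; lra). nra. Qed.

Lemma claim2 L : rsum (sq g) L <= Cst.
Proof.
  set (A := rsum (sq g) L).
  assert (HA0 : 0 <= A) by (apply rsum_ge0; intros; apply sq_ge0).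
  assert (Hcst : 0 <= Cst) by (unfold Cst; apply Rmult_le_pos; [apply pow2_ge_0|apply Bn_ge0]).
  assert (key : forall rho, 0 < rho < 1 -> (rho ^ L) ^ 2 * A <= Cst).
  { intros rho Hr. eapply Rle_trans; [|apply (claim1 rho L Hr)]. unfold A. rewrite <- rsum_mult_l.
    apply rsum_le. intros n Hn. unfold sq. rewrite Cmod_mult, Cmod_R, Rabs_pos_eq by (apply pow_le; lra).
    assert (rho ^ L <= rho ^ n).
    { replace L with (n + (L - n))%nat by lia. rewrite pow_add.
      assert (rho ^ (L - n) <= 1) by (rewrite <- (pow1 (L - n)); apply pow_incr; lra).
      assert (0 <= rho ^ n) by (apply pow_le; lra). nra. }
    assert (0 <= rho ^ L) by (apply pow_le; lra).
    rewrite Rpow_mult_distr. rewrite Rmult_comm. apply Rmult_le_compat_l. apply pow2_ge_0.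
    apply pow_incr; lra. }
  destruct (Rle_lt_dec A Cst) as [|Hlt]; auto. exfalso.
  set (dl := (A - Cst) / (2 * A * (2 * INR L + 1))).
  assert (HLp : 0 < 2 * INR L + 1) by (pose proof (pos_INR L); lra).
  assert (Hdl : 0 < dl) by (unfold dl; apply Rdiv_lt_0_compat; [lra|]; apply Rmult_lt_0_compat; lra).
  set (x := Rmin (1/2) dl).
  assert (Hx : 0 < x <= 1/2) by (unfold x; split; [apply Rmin_glb_lt; lra|apply Rmin_l]).
  assert (Hxd : x <= dl) by apply Rmin_r.
  specialize (key (1 - x) ltac:(lra)). rewrite <- pow_mult in key.
  pose proof (bernoulli x (L * 2) ltac:(lra)) as Hb2. rewrite mult_INR in Hb2. simpl INR in Hb2.
  assert (Hm : (1 - INR L * (1 + 1) * x) * A <= (1 - x) ^ (L * 2) * A) by (apply Rmult_le_compat_r; lra).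
  assert (INR L * (1 + 1) * x * A <= INR L * 2 * dl * A).
  { pose proof (pos_INR L). apply Rmult_le_compat_r; auto. replace (1 + 1) with 2 by ring.
    apply Rmult_le_compat_l; nra. }
  assert (INR L * 2 * dl * A <= (A - Cst) / 2).
  { unfold dl. apply Rle_trans with ((A - Cst) / 2 * ((2 * INR L) / (2 * INR L + 1))).
    right. field. split; lra.
    rewrite <- (Rmult_1_r ((A - Cst) / 2)) at 2. apply Rmult_le_compat_l. lra.
    apply Rmult_le_reg_r with (2 * INR L + 1); auto. unfold Rdiv. rewrite Rmult_assoc, Rinv_l by lra. lra. }
  nra.
Qed.

Lemma key_H2 : inH2 g.
Proof. unfold inH2. apply ex_series_bounded with Cst. intros; apply pow2_ge_0. intros N. apply claim2. Qed.

End Key.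

Lemma Hinf_mult_H2 t b : Hinf t -> inH2 b -> inH2 (Mtheta t b).
Proof. intros Ht Hb. destruct (Hinf_M t Ht) as [M [HM0 HM]]. eapply key_H2; eauto. Qed.


Lemma Mtheta_Mz t a : Mtheta t (Mz a) = Mz (Mtheta t a).
Proof. apply functional_extensionality. intros [|m].
  - rewrite Mtheta_csum. simpl. ring.
  - rewrite Mtheta_csum. simpl Mz at 2. rewrite Mtheta_csum. rewrite csum_Sr. rewrite Nat.sub_diag. change (Mz a 0%nat) with (RtoC 0).
    rewrite (csum_ext _ (fun k => Cmult (t k) (a (m - k)%nat))). ring.
    intros k Hk. replace (S m - k)%nat with (S (m - k)) by lia. reflexivity. Qed.

Lemma J_Mz a : JH2 (Mz a) = Mz (JH2 a).
Proof. apply functional_extensionality. intros [|m]; unfold JH2, Mz; simpl; auto.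
  apply Ceq; simpl; ring. Qed.
Lemma JJ a : JH2 (JH2 a) = a.
Proof. apply functional_extensionality. intros n. unfold JH2. apply Cconj_conj. Qed.
Lemma J_add a b : JH2 (addS a b) = addS (JH2 a) (JH2 b).
Proof. apply functional_extensionality. intros n. unfold JH2, addS. apply Cplus_conj. Qed.
Lemma J_scal c a : JH2 (scalS c a) = scalS (Cconj c) (JH2 a).
Proof. apply functional_extensionality. intros n. unfold JH2, scalS. apply Cmult_conj. Qed.
Lemma H2norm_J a : H2norm (JH2 a) = H2norm a.
Proof. unfold H2norm, JH2. f_equal. apply Series_ext. intros n. rewrite Cmod_conj. reflexivity. Qed.

Lemma bound_nonneg (T : seqC -> seqC) K : (forall a, inH2 a -> H2norm (T a) <= K * H2norm a) ->
  forall a, inH2 a -> H2norm (T a) <= Rmax K 0 * H2norm a.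
Proof. intros H a Ha. eapply Rle_trans. apply H; auto. apply Rmult_le_compat_r. apply H2norm_ge0. apply Rmax_l. Qed.

Theorem proposition10p3 (X S U Ustar : seqC -> seqC) :
  bounded_antilinear X ->
  unilateral_shift S ->
  unitary U Ustar ->
  (forall a, inH2 a -> S a = Ustar (Mz (U a))) ->
  ((forall a, inH2 a -> X (Mz a) = S (X a)) <->
   exists t : seqC, Hinf t /\ forall a, inH2 a -> X a = Ustar (Mtheta t (JH2 a))).
Proof.
  intros [[Xmap [Kx HKx]] [Xadd Xscal]] _ [[[Umap [Ku HKu]] [Uadd Uscal]] [[Usmap _] [UUs UsU]]] HS.
  split.
  - intros HX.
    set (Y := fun a => U (X (JH2 a))).
    assert (Ymap : maps_H2 Y) by (intros a Ha; unfold Y; apply Umap, Xmap, inH2_J, Ha).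
    set (K := Rmax Ku 0 * Rmax Kx 0).
    assert (HK : 0 <= K) by (unfold K; apply Rmult_le_pos; apply Rmax_r).
    assert (Ybd : forall a, inH2 a -> H2norm (Y a) <= K * H2norm a).
    { intros a Ha. unfold Y. eapply Rle_trans. apply (bound_nonneg U Ku HKu). apply Xmap, inH2_J, Ha.
      unfold K. rewrite Rmult_assoc. apply Rmult_le_compat_l. apply Rmax_r.
      rewrite <- (H2norm_J a). apply (bound_nonneg X Kx HKx). apply inH2_J, Ha. }
    assert (Ylin : linear_op Y).
    { split.
      - intros a b Ha Hb. unfold Y. rewrite J_add, Xadd, Uadd; auto using inH2_J.
      - intros c a Ha. unfold Y. rewrite J_scal, Xscal, Cconj_conj, Uscal; auto using inH2_J. }
    assert (Ycomm : forall a, inH2 a -> Y (Mz a) = Mz (Y a)).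
    { intros a Ha. unfold Y. rewrite J_Mz, HX, HS by auto using inH2_J. apply UUs.
      apply inH2_Mz, Umap, Xmap, inH2_J, Ha. }
    exists (Y e0). split.
    + eapply th_Hinf; eauto.
    + intros a Ha. rewrite <- (Y_eq Y Ylin Ycomm) by (apply inH2_J; auto). unfold Y. rewrite JJ.
      symmetry. apply UsU. apply Xmap, Ha.
  - intros [t [Ht HXt]] a Ha.
    rewrite HXt by (apply inH2_Mz; auto). rewrite HS by (apply Xmap; auto).
    rewrite HXt by auto. rewrite UUs by (apply Hinf_mult_H2; auto using inH2_J).
    rewrite J_Mz, Mtheta_Mz. reflexivity.
Qed.
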